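(* Let $G$ be a connected graph and $H$ an isometric subgraph of $G$ which is a Helly graph. Then: (i) for every $v\in V(G)$, $S_H(v)\neq\varnothing$; (ii) for every edge $uv\in E(G)$ and every $y\in S_H(u)$, we have $d(y,S_H(v))\le 1$.
   Context: Graphs are finite and simple; $d=d_G$ denotes distance in $G$, and $d(y,S)=\min_{s\in S}d(y,s)$. A subgraph $H$ of $G$ is isometric if $d_H(x,y)=d_G(x,y)$ for all $x,y\in V(H)$. For $u\in V(H)$, $k\ge0$, $N_H^k[u]=\{y\in V(H): d_H(u,y)\le k\}$. A graph $H$ is a Helly graph if every subfamily of $\{N_H^k[u]: u\in V(H), k\ge0\}$ whose members pairwise intersect has nonempty intersection. The wide shadow of $v\in V(G)$ on $H$ is $S_H(v)=\{y\in V(H): d(y,x)\le d(v,x)\text{ for all } x\in V(H)\}$. *)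

(* Defs.v *)
(* Graphs: a finite simple graph on a finType T is a
   symmetric irreflexive relation e : rel T (vertex set = T). *)
From mathcomp Require Import all_boot all_order.
Set Implicit Arguments. Unset Strict Implicit. Unset Printing Implicit Defensive.

Section Graphs.
Variable T : finType.

Definition simple_graph (e : rel T) : Prop :=
  symmetric e /\ irreflexive e.

Definition connected_graph (e : rel T) : Prop := forall x y : T, connect e x y.

Fixpoint ball (r : rel T) (k : nat) (x : T) : {set T} :=
  match k with
  | 0 => [set x]
  | k'.+1 => ball r k' x :|: [set z | [exists w in ball r k' x, r w z]]
  end.

(* graph distance w.r.t. r: least k with y in ball r k x; every finite
   distance is < #|T|, and #|T| plays the role of infinity. *)
Definition dist (r : rel T) (x y : T) : nat :=
  find (fun k => y \in ball r k x) (iota 0 #|T|).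

(* d(y,S) = min_{s in S} d(y,s)  (= #|T| i.e. "infinity" if S is empty) *)
Definition dist_set (r : rel T) (y : T) (S : {set T}) : nat :=
  \big[minn/#|T|]_(s in S) dist r y s.

Definition subgraph (e : rel T) (VH : {set T}) (eH : rel T) : Prop :=
  symmetric eH /\ forall x y, eH x y -> [&& x \in VH, y \in VH & e x y].

Definition isometric (e : rel T) (VH : {set T}) (eH : rel T) : Prop :=
  forall x y, x \in VH -> y \in VH -> dist eH x y = dist e x y.

(* N_H^k[u] = ball eH k u for u in VH (walks in H stay in V(H)). *)
Definition helly (VH : {set T}) (eH : rel T) : Prop :=
  forall F : (T * nat) -> Prop,
    (forall p, F p -> p.1 \in VH) ->
    (forall p q, F p -> F q -> exists y, (y \in ball eH p.2 p.1) && (y \in ball eH q.2 q.1)) ->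
    exists2 y, y \in VH & forall p, F p -> y \in ball eH p.2 p.1.

Definition wide_shadow (e : rel T) (VH : {set T}) (v : T) : {set T} :=
  [set y in VH | [forall x in VH, dist e y x <= dist e v x]].

End Graphs.

(* Main.v *)
Require Import Defs.
From mathcomp Require Import all_boot all_order.

Set Implicit Arguments.
Unset Strict Implicit.

Section Aux.
Variable T : finType.
Implicit Types (r : rel T) (x y z : T).

Lemma ball_center r k x : x \in ball r k x.
Proof. elim: k => [|k IH] /=; first by rewrite inE. by rewrite inE IH. Qed.

Lemma ball0P r x y : y \in ball r 0 x -> y = x.
Proof. by rewrite inE => /eqP. Qed.

Lemma ballSP r k x y : y \in ball r k.+1 x ->
  y \in ball r k x \/ exists2 c, c \in ball r k x & r c y.
Proof.
rewrite /= inE => /orP [h|]; first by left.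
by rewrite inE => /existsP [c /andP [hc hcy]]; right; exists c.
Qed.

Lemma ball_S r k x y : y \in ball r k x -> y \in ball r k.+1 x.
Proof. by move=> h /=; rewrite inE h. Qed.

Lemma ball_mono r k k' x y : k <= k' -> y \in ball r k x -> y \in ball r k' x.
Proof.
move=> /subnK <-; elim: (k' - k) => [|n IH] // h.
by rewrite addSn; apply: ball_S; apply: IH.
Qed.

Lemma ball_step r k x y z : y \in ball r k x -> r y z -> z \in ball r k.+1 x.
Proof.
move=> hy hr /=; rewrite inE; apply/orP; right; rewrite inE.
by apply/existsP; exists y; rewrite hy.
Qed.

Lemma ball_cons r k x w y : r x w -> y \in ball r k w -> y \in ball r k.+1 x.
Proof.
move=> hxw; elim: k y => [|k IH] y.
  move=> /ball0P ->; apply: (ball_step (k:=0) (y:=x)) => //; exact: ball_center.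
move=> /ballSP [h|[c hc hcy]]; first by apply: ball_S; apply: IH.
apply: (ball_step (y:=c)) => //; exact: IH.
Qed.

Lemma ball_sym r k x y : symmetric r -> y \in ball r k x -> x \in ball r k y.
Proof.
move=> sr; elim: k y => [|k IH] y.
  by move=> /ball0P ->; rewrite inE.
move=> /ballSP [h|[c hc hcy]]; first by apply: ball_S; apply: IH.
apply: (ball_cons (w:=c)); first by rewrite sr.
exact: IH.
Qed.

Lemma ball_trans r i j x y z :
  y \in ball r i x -> z \in ball r j y -> z \in ball r (i + j) x.
Proof.
move=> hy; elim: j z => [|j IH] z.
  by move=> /ball0P ->; rewrite addn0.
move=> /ballSP [h|[c hc hcz]]; first by rewrite addnS; apply: ball_S; apply: IH.
rewrite addnS; apply: (ball_step (y:=c)) => //; exact: IH.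
Qed.

Lemma ball_split r i j a b :
  b \in ball r (i + j) a -> exists w, w \in ball r i a /\ b \in ball r j w.
Proof.
elim: j b => [|j IH] b.
  rewrite addn0 => h; exists b; split => //; exact: ball_center.
rewrite addnS => /ballSP [h|[c hc hcb]].
  have [w [h1 h2]] := IH _ h; exists w; split => //; exact: ball_S.
have [w [h1 h2]] := IH _ hc; exists w; split => //.
exact: (ball_step (y:=c)).
Qed.

Lemma dist_le r k x y : y \in ball r k x -> dist r x y <= k.
Proof.
move=> h; rewrite /dist.
case: (ltnP k #|T|) => hk; last first.
  by apply: leq_trans (find_size _ _) _; rewrite size_iota.
rewrite leqNgt; apply/negP => /(before_find 0).
by rewrite nth_iota // add0n h.
Qed.

Lemma dist_ball r x y : dist r x y < #|T| -> y \in ball r (dist r x y) x.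
Proof.
move=> h.
have hs : has (fun k => y \in ball r k x) (iota 0 #|T|).
  by rewrite has_find size_iota.
have := nth_find 0 hs; rewrite nth_iota; first by rewrite add0n.
by rewrite -[X in _ < X](size_iota 0 #|T|) -has_find.
Qed.

Lemma path_ball r x p : path r x p -> last x p \in ball r (size p) x.
Proof.
elim: p x => [|c p IH] x /=; first by move=> _; rewrite inE.
move=> /andP [hxc hp]; apply: (ball_cons (w:=c)) => //; exact: IH.
Qed.

Lemma connect_ball r x y : connect r x y -> dist r x y < #|T|.
Proof.
move=> /connectP [p hp ->].
case: (shortenP hp) => p' hp' hu _.
have h := path_ball hp'.
apply: leq_ltn_trans (dist_le h) _.
have := card_uniqP hu => /= <-.
exact: max_card.
Qed.

Lemma bigmin_le (s : seq T) (F : T -> nat) (N : nat) z :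
  z \in s -> \big[minn/N]_(i <- s) F i <= F z.
Proof.
elim: s => [|a s IH] //; rewrite inE big_cons => /orP [/eqP ->|h].
  exact: geq_minl.
exact: leq_trans (geq_minr _ _) (IH h).
Qed.

Lemma bigmin_le' (s : seq T) (P : pred T) (F : T -> nat) (N : nat) z :
  z \in s -> P z -> \big[minn/N]_(i <- s | P i) F i <= F z.
Proof.
move=> hz hP; elim: s hz => [|a s IH] //; rewrite inE big_cons => /orP [/eqP <-|h].
  rewrite hP; exact: geq_minl.
case: (P a); last exact: IH.
exact: leq_trans (geq_minr _ _) (IH h).
Qed.

Lemma dist_set_le r y (S : {set T}) z : z \in S -> dist_set r y S <= dist r y z.
Proof.
move=> hz; rewrite /dist_set.
apply: bigmin_le'; [exact: mem_index_enum | exact: hz].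
Qed.

End Aux.

Theorem lemma2p3 (T : finType) (e : rel T) (VH : {set T}) (eH : rel T) :
  simple_graph e -> connected_graph e ->
  subgraph e VH eH -> isometric e VH eH -> helly VH eH ->
  (forall v : T, wide_shadow e VH v != set0) /\
  (forall u v : T, e u v -> forall y, y \in wide_shadow e VH u ->
     dist_set e y (wide_shadow e VH v) <= 1).
Proof.
move=> [se ie] ce [seH sub] iso hel.
have dfin : forall x y, dist e x y < #|T| by move=> x y; apply: connect_ball.
have dsym : forall x y, dist e x y = dist e y x.
  move=> x y; apply/eqP; rewrite eqn_leq; apply/andP; split; apply: dist_le;
  apply: ball_sym => //; apply: dist_ball; exact: dfin.
have dtri : forall x y z, dist e x z <= dist e x y + dist e y z.
  move=> x y z; apply: dist_le; apply: (ball_trans (y:=y)); apply: dist_ball; exact: dfin.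
have inter : forall x x' i j, x \in VH -> x' \in VH -> dist e x x' <= i + j ->
    exists w, (w \in ball eH i x) && (w \in ball eH j x').
  move=> x x' i j hx hx' hd.
  have hb : x' \in ball eH (i + j) x.
    apply: (ball_mono hd); rewrite -(iso _ _ hx hx'); apply: dist_ball.
    by rewrite (iso _ _ hx hx').
  have [w [h1 h2]] := ball_split hb; exists w; rewrite h1 /=.
  exact: ball_sym.
have bd : forall x w k, x \in VH -> w \in VH -> w \in ball eH k x -> dist e w x <= k.
  move=> x w k hx hw hb; rewrite dsym -(iso _ _ hx hw); exact: dist_le.
have bVH : forall k x w, x \in VH -> w \in ball eH k x -> w \in VH.
  elim=> [|k IH] x w hx /=; first by rewrite inE => /eqP ->.
  rewrite inE => /orP [h|]; first exact: IH h.
  rewrite inE => /existsP [c /andP [_ hcw]].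
  by have /and3P [_ -> _] := sub _ _ hcw.
have key : forall v x x', x \in VH -> x' \in VH ->
    exists w, (w \in ball eH (dist e v x) x) && (w \in ball eH (dist e v x') x').
  move=> v x x' hx hx'; apply: inter => //.
  by rewrite (leq_trans (dtri x v x')) // dsym.
split.
- move=> v.
  have [y hy hall] := hel (fun p => p.1 \in VH /\ p.2 = dist e v p.1)
    (fun p hp => proj1 hp)
    (fun p q hp hq => ltac:(case: p q hp hq => [x k] [x' k'] /= [hx ->] [hx' ->];
                            exact: key)).
  apply/set0Pn; exists y; rewrite inE hy /=; apply/forallP => x; apply/implyP => hx.
  apply: (bd x y) => //; exact: (hall (x, dist e v x) (conj hx erefl)).
- move=> u v huv y.
  rewrite inE => /andP [hy /forallP hyall].
  have hyx : forall x, x \in VH -> dist e y x <= 1 + dist e v x.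
    move=> x hx; apply: leq_trans (implyP (hyall x) hx) _.
    apply: leq_trans (dtri u v x) _; rewrite leq_add2r; apply: dist_le.
    by apply: (ball_step (y:=u)) => //; exact: ball_center.
  pose F := fun p : T * nat => (p.1 \in VH /\ p.2 = dist e v p.1) \/ p = (y, 1).
  have F1 : forall p, F p -> p.1 \in VH.
    by move=> p [[]//|->].
  have F2 : forall p q, F p -> F q ->
      exists w, (w \in ball eH p.2 p.1) && (w \in ball eH q.2 q.1).
    move=> [x k] [x' k'] [[/= hx hk]|[-> ->]] [[/= hx' hk']|[-> ->]].
    - by rewrite hk hk'; exact: key.
    - rewrite hk. apply: inter => //. by rewrite dsym addnC; apply: hyx.
    - apply: (inter y x' 1 k') => //; rewrite hk'; exact: hyx.
    - by exists y; rewrite ball_center.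
  have [z hz hall] := hel F F1 F2.
  have hzv : z \in wide_shadow e VH v.
    rewrite inE hz /=; apply/forallP => x; apply/implyP => hx.
    apply: (bd x z) => //; exact: (hall (x, dist e v x) (or_introl (conj hx erefl))).
  have hzy : dist e y z <= 1.
    rewrite dsym; apply: (bd y z) => //; exact: (hall (y, 1) (or_intror erefl)).
  exact: leq_trans (dist_set_le _ _ hzv) hzy.
Qed.
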